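(* Let $L_t,M_t:(-\epsilon,\epsilon)\to SU(3)$ be smooth paths, and let $L'_0=L_0^{-1}\frac{dL_t}{dt}\big|_{t=0}$. Assume $$L_0=\begin{pmatrix}\lambda&0&0\\0&\lambda&0\\0&0&\lambda^{-2}\end{pmatrix},\qquad L'_0=\begin{pmatrix}i\alpha&0&0\\0&-i\alpha&0\\0&0&0\end{pmatrix},$$ where $\lambda$ is a complex number of modulus one and of infinite multiplicative order, and $\alpha\neq0$ is real. If $\frac{d}{dt}\mathrm{tr}(W_t)\big|_{t=0}=0$ for every word $W_t$ in $L_t$ and $M_t$, then $M_0\in G_\eta$ for some $\eta\in[0,2\pi)$.
   Context: A word in $L_t,M_t$ is a finite product of the matrices $L_t^{\pm1},M_t^{\pm1}$. For $\eta\in[0,2\pi)$, $G_\eta$ is the subgroup of $SU(3)$ consisting of matrices of the form $\begin{pmatrix}a&be^{-i\eta}&c\\ be^{i\eta}&a&ce^{i\eta}\\ c'&c'e^{-i\eta}&d\end{pmatrix}$ with $a,b,c,c',d\in\mathbb{C}$. *)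

(* Defs.v *)
From HB Require Import structures.
From mathcomp Require Import all_boot all_order all_algebra.
From mathcomp Require Import all_classical all_reals all_analysis.
From mathcomp Require Import complex.
Set Implicit Arguments. Unset Strict Implicit. Unset Printing Implicit Defensive.
Import Order.TTheory GRing.Theory Num.Theory.
Local Open Scope ring_scope.
Local Open Scope complex_scope.

Section Defs.
Variable R : realType.
Local Notation C := R[i].

Definition adjmx (A : 'M[C]_3) : 'M[C]_3 := (map_mx conjc A)^T.

Definition SU3 (A : 'M[C]_3) : Prop := A *m adjmx A = 1%:M /\ \det A = 1.

Definition cderive (f : R -> C) (t : R) : C :=
  (derive1 (fun s => complex.Re (f s)) t) +i* (derive1 (fun s => complex.Im (f s)) t).

Definition mderive (P : R -> 'M[C]_3) (t : R) : 'M[C]_3 :=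
  \matrix_(i, j) cderive (fun s => P s i j) t.

Definition smooth_on (eps : R) (f : R -> R) : Prop :=
  forall (n : nat) (t : R), - eps < t < eps -> derivable (derive1n n f) t 1.

Definition smooth_SU3_path (eps : R) (P : R -> 'M[C]_3) : Prop :=
  (forall t, - eps < t < eps -> SU3 (P t)) /\
  (forall i j, smooth_on eps (fun s => complex.Re (P s i j)) /\
               smooth_on eps (fun s => complex.Im (P s i j))).

(* a word in L_t, M_t: a letter (g, e) stands for (if g then L_t else M_t)
   raised to the power +1 (e = true) or -1 (e = false) *)
Definition letter_eval (L M : R -> 'M[C]_3) (t : R) (x : bool * bool) : 'M[C]_3 :=
  let A := if x.1 then L t else M t in if x.2 then A else invmx A.

Definition word_eval (L M : R -> 'M[C]_3) (w : seq (bool * bool)) (t : R) : 'M[C]_3 :=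
  \prod_(x <- w) letter_eval L M t x.

Definition expi (eta : R) : C := cos eta +i* sin eta.

Definition G_eta (eta : R) (A : 'M[C]_3) : Prop :=
  SU3 A /\ exists a b c c' d : C,
    A = \matrix_(i < 3, j < 3)
          nth 0 (nth [::] [:: [:: a; b * (expi eta)^-1; c];
                             [:: b * expi eta; a; c * expi eta];
                             [:: c'; c' * (expi eta)^-1; d]] i) j.

End Defs.

(* Main.v *)
Require Import Defs.
From HB Require Import structures.
From mathcomp Require Import all_boot all_order all_algebra.
From mathcomp Require Import all_classical all_reals all_analysis.
From mathcomp Require Import complex.
From mathcomp Require Import ring lra.
Import Order.TTheory GRing.Theory Num.Theory.
Local Open Scope ring_scope.
Local Open Scope complex_scope.
Set Implicit Arguments. Unset Strict Implicit. Unset Printing Implicit Defensive.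

Definition cdiff (R : realType) (f : R -> R[i]) : Prop :=
  derivable (fun s => complex.Re (f s)) 0 1 /\ derivable (fun s => complex.Im (f s)) 0 1.

Lemma cderiveE (R : realType) (f : R -> R[i]) :
  cderive f 0 = ('D_1 (fun s => complex.Re (f s)) 0) +i* ('D_1 (fun s => complex.Im (f s)) 0).
Proof. by rewrite /cderive !derive1E. Qed.

Lemma cdiffD (R : realType) (f g : R -> R[i]) : cdiff f -> cdiff g ->
  cdiff (fun t => f t + g t) /\ cderive (fun t => f t + g t) 0 = cderive f 0 + cderive g 0.
Proof.
move=> [f1 f2] [g1 g2]; rewrite /cdiff !cderiveE /=.
have -> : (fun s => complex.Re (f s + g s)) = (fun s => complex.Re (f s)) + (fun s => complex.Re (g s)) :> (R -> R).
  by rewrite addrfctE; apply: funext => s /=; case: (f s) => ? ?; case: (g s).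
have -> : (fun s => complex.Im (f s + g s)) = (fun s => complex.Im (f s)) + (fun s => complex.Im (g s)) :> (R -> R).
  by rewrite addrfctE; apply: funext => s /=; case: (f s) => ? ?; case: (g s).
split; first split.
- exact: (derivableD f1 g1).
- exact: (derivableD f2 g2).
rewrite (deriveD f1 g1) (deriveD f2 g2).
by case: (f 0) => ? ?; case: (g 0).
Qed.

Lemma cdiffM (R : realType) (f g : R -> R[i]) : cdiff f -> cdiff g ->
  cdiff (fun t => f t * g t) /\ cderive (fun t => f t * g t) 0 = cderive f 0 * g 0 + f 0 * cderive g 0.
Proof.
move=> [f1 f2] [g1 g2]; rewrite /cdiff !cderiveE /=.
have eR : (fun s => complex.Re (f s * g s)) = (fun s => complex.Re (f s)) * (fun s => complex.Re (g s)) - (fun s => complex.Im (f s)) * (fun s => complex.Im (g s)).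
  rewrite !mulrfctE opprfctE addrfctE; apply: funext => s /=.
  by case: (f s) => ? ?; case: (g s).
have eI : (fun s => complex.Im (f s * g s)) = (fun s => complex.Re (f s)) * (fun s => complex.Im (g s)) + (fun s => complex.Im (f s)) * (fun s => complex.Re (g s)).
  rewrite !mulrfctE addrfctE; apply: funext => s /=.
  by case: (f s) => ? ?; case: (g s).
have d1 := derivableM f1 g1; have d2 := derivableM f2 g2.
have d3 := derivableM f1 g2; have d4 := derivableM f2 g1.
rewrite eR eI; split; first split.
- exact: derivableB.
- exact: derivableD.
rewrite (deriveB d1 d2) (deriveD d3 d4).
rewrite (deriveM f1 g1) (deriveM f2 g2) (deriveM f1 g2) (deriveM f2 g1).
move: ('D_1 (fun s => complex.Re (f s)) 0) ('D_1 (fun s => complex.Im (f s)) 0) ('D_1 (fun s => complex.Re (g s)) 0) ('D_1 (fun s => complex.Im (g s)) 0) => A B C D.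
rewrite /=.
move: (f 0) (g 0) => [a b] [c d] /=.
have sc : forall x y : R, x *: y = x * y by [].
rewrite !sc; apply/eqP; rewrite eq_complex /=; apply/andP; split; apply/eqP; ring.
Qed.

Lemma cdiffC (R : realType) (c : R[i]) : cdiff (fun _ : R => c) /\ cderive (fun _ : R => c) 0 = 0.
Proof.
rewrite /cdiff cderiveE; split; first split; try exact: derivable_cst.
by rewrite !derive_cst.
Qed.

Lemma cdiff_sum (R : realType) (I : Type) (r : seq I) (P : pred I) (F : I -> R -> R[i]) :
  (forall i, cdiff (F i)) ->
  cdiff (fun t => \sum_(i <- r | P i) F i t) /\
  cderive (fun t => \sum_(i <- r | P i) F i t) 0 = \sum_(i <- r | P i) cderive (F i) 0.
Proof.
move=> dF; elim: r => [|x r [IH1 IH2]].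
  under eq_fun do rewrite big_nil.
  by rewrite big_nil; exact: cdiffC.
under eq_fun do rewrite big_cons.
rewrite big_cons; case: (P x).
  by have [] := cdiffD (dF x) IH1; rewrite IH2.
by [].
Qed.

Lemma cdiff_conj (R : realType) (f : R -> R[i]) : cdiff f -> cdiff (fun t => (f t)^*).
Proof.
move=> [f1 f2]; split.
  by have -> : (fun s => complex.Re ((f s)^*)) = (fun s => complex.Re (f s)) by apply: funext => s; case: (f s).
have -> : (fun s => complex.Im ((f s)^*)) = - (fun s => complex.Im (f s)).
  by rewrite opprfctE; apply: funext => s; case: (f s).
exact: derivableN.
Qed.

Lemma cdiff_near (R : realType) (f g : R -> R[i]) :
  (\forall t \near 0, f t = g t) -> cdiff f -> cdiff g /\ cderive g 0 = cderive f 0.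
Proof.
move=> fg [f1 f2]; rewrite /cdiff !cderiveE.
have h1 : \forall t \near 0, complex.Re (f t) = complex.Re (g t) by near=> t; rewrite (near fg t).
have h2 : \forall t \near 0, complex.Im (f t) = complex.Im (g t) by near=> t; rewrite (near fg t).
split; first split.
- exact: (near_eq_derivable h1 f1).
- exact: (near_eq_derivable h2 f2).
by rewrite (near_eq_derive _ h1) ?(near_eq_derive _ h2).
Unshelve. all: by end_near.
Qed.

Definition mdiff (R : realType) (P : R -> 'M[R[i]]_3) : Prop :=
  forall i j, cdiff (fun t => P t i j).

Lemma mderiveE (R : realType) (P : R -> 'M[R[i]]_3) i j :
  mderive P 0 i j = cderive (fun t => P t i j) 0.
Proof. by rewrite /mderive mxE. Qed.

Lemma mdiff_mul (R : realType) (P Q : R -> 'M[R[i]]_3) : mdiff P -> mdiff Q ->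
  mdiff (fun t => P t *m Q t) /\
  mderive (fun t => P t *m Q t) 0 = mderive P 0 *m Q 0 + P 0 *m mderive Q 0.
Proof.
move=> dP dQ.
have H : forall i j, cdiff (fun t => (P t *m Q t) i j) /\
   cderive (fun t => (P t *m Q t) i j) 0 = (mderive P 0 *m Q 0 + P 0 *m mderive Q 0) i j.
  move=> i j.
  under eq_fun do rewrite mxE.
  have [h1 h2] := @cdiff_sum _ _ (index_enum 'I_3) xpredT (fun k t => P t i k * Q t k j)
     (fun k => proj1 (cdiffM (dP i k) (dQ k j))).
  split; first exact: h1.
  rewrite h2 !mxE -big_split /=; apply: eq_bigr => k _.
  by rewrite (proj2 (cdiffM (dP i k) (dQ k j))) !mderiveE.
split; first by move=> i j; exact: (proj1 (H i j)).
by apply/matrixP => i j; rewrite mderiveE (proj2 (H i j)).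
Qed.

Lemma mdiff_tr (R : realType) (P : R -> 'M[R[i]]_3) : mdiff P ->
  cderive (fun t => \tr (P t)) 0 = \tr (mderive P 0).
Proof.
move=> dP; rewrite /mxtrace.
have [_ ->] := @cdiff_sum _ _ (index_enum 'I_3) xpredT (fun k t => P t k k) (fun k => dP k k).
by apply: eq_bigr => k _; rewrite mderiveE.
Qed.

Lemma mdiff_adj (R : realType) (P : R -> 'M[R[i]]_3) : mdiff P -> mdiff (fun t => adjmx (P t)).
Proof.
move=> dP i j; under eq_fun do rewrite /adjmx !mxE.
exact: cdiff_conj.
Qed.

Lemma mdiff_near (R : realType) (P Q : R -> 'M[R[i]]_3) :
  (\forall t \near 0, P t = Q t) -> mdiff P -> mdiff Q /\ mderive Q 0 = mderive P 0.
Proof.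
move=> PQ dP.
have H : forall i j, cdiff (fun t => Q t i j) /\ cderive (fun t => Q t i j) 0 = cderive (fun t => P t i j) 0.
  move=> i j; apply: cdiff_near (dP i j).
  by near=> t; rewrite (near PQ t).
split; first by move=> i j; exact: (proj1 (H i j)).
by apply/matrixP => i j; rewrite !mderiveE (proj2 (H i j)).
Unshelve. all: by end_near.
Qed.

Lemma mdiff_word (R : realType) (L M : R -> 'M[R[i]]_3) :
  (forall x, mdiff (fun t => letter_eval L M t x)) ->
  forall w, mdiff (word_eval L M w).
Proof.
move=> dl; elim=> [|x w IH].
  rewrite /word_eval; move=> i j; under eq_fun do rewrite big_nil.
  exact: (proj1 (cdiffC _)).
have -> : word_eval L M (x :: w) = fun t => letter_eval L M t x *m word_eval L M w t.
  by apply: funext => t; rewrite /word_eval big_cons mulmxE.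
exact: (proj1 (mdiff_mul (dl x) IH)).
Qed.
Lemma mulcJE (R : realType) (x : R[i]) :
  x * (conjc x) = ((complex.Re x)^+2 + (complex.Im x)^+2) +i* 0.
Proof. case: x => a b; apply/eqP; rewrite eq_complex /=; apply/andP; split; apply/eqP; ring. Qed.

Lemma mulcJ_eq0 (R : realType) (x : R[i]) : x * (conjc x) = 0 -> x = 0.
Proof.
rewrite mulcJE; case: x => a b /= /eqP; rewrite eq_complex /= => /andP[/eqP h _].
have ha : a = 0 by nra.
have hb : b = 0 by nra.
by rewrite ha hb.
Qed.

Lemma mulcJ_neq0 (R : realType) (x : R[i]) : x != 0 -> x * (conjc x) != 0.
Proof. by move=> nz; apply/eqP => /mulcJ_eq0 /eqP; rewrite (negbTE nz). Qed.

Lemma conjcM (R : realType) (x y : R[i]) : (conjc (x * y)) = (conjc x) * (conjc y).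
Proof. exact: rmorphM. Qed.

Lemma conjcK' (R : realType) (x : R[i]) : (conjc ((conjc x))) = x.
Proof. by case: x => a b; rewrite /= opprK. Qed.

Lemma conjcV' (R : realType) (x : R[i]) : (conjc (x^-1)) = ((conjc x))^-1.
Proof. exact: conjc_inv. Qed.

Lemma core_alg (R : realType) (m00 m01 m02 m10 m11 m12 m20 m21 m22 : R[i]) :
  m00 = m11 ->
  m02 * m20 = m12 * m21 ->
  m02 * (conjc m02) = m12 * (conjc m12) ->
  (conjc m20) * m20 = (conjc m21) * m21 ->
  m01 * (conjc m01) = m10 * (conjc m10) ->
  (conjc m00) * m02 + (conjc m10) * m12 + (conjc m20) * m22 = 0 ->
  (conjc m01) * m02 + (conjc m11) * m12 + (conjc m21) * m22 = 0 ->
  m00 * (conjc m20) + m01 * (conjc m21) + m02 * (conjc m22) = 0 ->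
  m10 * (conjc m20) + m11 * (conjc m21) + m12 * (conjc m22) = 0 ->
  (exists z : R[i], z * (conjc z) = 1 /\ m12 = z * m02 /\ m20 = z * m21 /\ m10 = z * z * m01)
  \/ (m02 = 0 /\ m12 = 0 /\ m20 = 0 /\ m21 = 0 /\ m01 != 0 /\ (m10 / m01) * (conjc (m10 / m01)) = 1).
Proof.
move=> a b c d e c02 c12 r02 r12.
have [z0|nz02] := eqVneq m02 0.
  have z12 : m12 = 0.
    by apply: mulcJ_eq0; rewrite -c z0 mul0r.
  have [z21|nz21] := eqVneq m21 0.
    have z20 : m20 = 0.
      apply: mulcJ_eq0; rewrite mulrC.
      by rewrite d z21 mulr0.
    have [z01|nz01] := eqVneq m01 0.
      have z10 : m10 = 0 by apply: mulcJ_eq0; rewrite -e z01 mul0r.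
      left; exists 1; rewrite z0 z12 z20 z21 z01 z10 !mulr0; split => //; by rewrite mul1r; apply/eqP; rewrite eq_complex /= oppr0 !eqxx.
    right; do 5 split => //.
    rewrite conjcM conjcV' mulrACA -invfM -e divff //.
    exact: mulcJ_neq0.
  left; exists (m20 / m21).
  have nz21' : (conjc m21) != 0 by rewrite conjc_eq0.
  have hz : (m20 / m21) * (conjc (m20 / m21)) = 1.
    rewrite conjcM conjcV' mulrACA -invfM [m20 * _]mulrC d [m21 * _]mulrC divff //.
    by rewrite mulrC; exact: mulcJ_neq0.
  split => //; split; first by rewrite z12 z0 mulr0.
  split; first by rewrite mulfVK.
  rewrite z0 mul0r addr0 in r02; rewrite z12 mul0r addr0 in r12.
  have h01 : m01 = - m00 * (conjc (m20 / m21)).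
    rewrite conjcM conjcV'; apply: (mulIf nz21').
    by rewrite -mulrA divfK // mulNr; apply/eqP; rewrite -addr_eq0 addrC r02.
  have h10 : m10 * (conjc (m20 / m21)) = - m11.
    rewrite conjcM conjcV'; apply: (mulIf nz21').
    by rewrite -mulrA divfK // mulNr; apply/eqP; rewrite -addr_eq0 r12.
  rewrite h01; rewrite -a in h10.
  have -> : m10 = m10 * ((conjc (m20 / m21)) * (m20 / m21)) by rewrite mulrC in hz; rewrite hz mulr1.
  rewrite mulrA h10; set z := m20 / m21; set z1 := conjc z.
  transitivity (- m00 * z * (z * z1)); first by rewrite /z1 hz mulr1.
  ring.
left; exists (m12 / m02).
have nz02' : (conjc m02) != 0 by rewrite conjc_eq0.
have hz : (m12 / m02) * (conjc (m12 / m02)) = 1.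
  rewrite conjcM conjcV' mulrACA -invfM -c divff //.
  exact: mulcJ_neq0.
split => //; split; first by rewrite mulfVK.
split.
  apply: (mulfI nz02); rewrite b; field; exact: nz02.
set z := m12 / m02 in hz *.
have e12 : m12 = z * m02 by rewrite /z mulfVK.
have e20 : m20 = z * m21 by apply: (mulfI nz02); rewrite b; rewrite /z; field.
clearbody z.
have eA : (conjc m00) * m02 + (conjc m10) * z * m02 + (conjc z) * (conjc m21) * m22 = 0.
  by rewrite -c02 e12 e20 !conjcM; ring.
have hz' : (conjc z) * z = 1 by rewrite mulrC.
have eB : (conjc z) * (conjc m01) * m02 + (conjc m11) * m02 + (conjc z) * (conjc m21) * m22 = 0.
  have := congr1 (fun x => (conjc z) * x) c12; rewrite mulr0 e12 => <-.
  have -> : (conjc z) * ((conjc m01) * m02 + (conjc m11) * (z * m02) + (conjc m21) * m22) =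
     (conjc z) * (conjc m01) * m02 + ((conjc z) * z) * (conjc m11) * m02 + (conjc z) * (conjc m21) * m22 by ring.
  by rewrite hz' mul1r.
have eC : m02 * ((conjc m10) * z - (conjc z) * (conjc m01)) = 0.
  have := congr2 (fun x y => x - y) eA eB; rewrite subrr a /= => <-; ring.
move/eqP: eC; rewrite mulf_eq0 (negbTE nz02) /= subr_eq0 => /eqP eC.
have := congr1 (@conjc R) eC; rewrite !conjcM !conjcK' => eD.
have -> : m10 = m10 * ((conjc z) * z) by rewrite hz' mulr1.
rewrite mulrA eD; ring.
Qed.
Lemma expi_unit (R : realType) (t : R) : expi t * conjc (expi t) = 1.
Proof.
rewrite /expi /=; apply/eqP; rewrite eq_complex /=; apply/andP; split; apply/eqP.
  by rewrite -(cos2Dsin2 t); ring.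
ring.
Qed.

Lemma expiD (R : realType) (a b : R) : expi (a + b) = expi a * expi b.
Proof.
rewrite /expi sinD cosD /=; apply/eqP; rewrite eq_complex /=; apply/andP; split; apply/eqP; ring.
Qed.

Lemma expi_exists (R : realType) (w : R[i]) : w * conjc w = 1 ->
  exists t : R, 0 <= t < 2 * pi /\ expi t = w.
Proof.
case: w => a b /eqP; rewrite eq_complex /= => /andP[/eqP h _].
have h1 : a ^+ 2 + b ^+ 2 = 1 by rewrite -h; ring.
have ha : -1 <= a <= 1 by apply/andP; split; nra.
have ca : cos (acos a) = a by apply: acosK; rewrite in_itv /=.
have sa : sin (acos a) = `|b|.
  rewrite sin_acos // -sqrtr_sqr; congr Num.sqrt; rewrite -h1; ring.
have p0 := pi_gt0 R.
have a0 := acos_ge0 ha; have ap := acos_lepi ha.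
have [b0|b0] := leP 0 b.
  exists (acos a); split; first by apply/andP; split => //; lra.
  by rewrite /expi ca sa ger0_norm.
exists (- acos a + pi *+ 2); split.
  have a1 : a < 1 by nra.
  have : 0 < acos a by apply: acos_gt0; apply/andP; split => //; case/andP: ha.
  by move=> ?; apply/andP; split; rewrite mulr2n; lra.
by rewrite /expi cosD2pi sinD2pi cosN sinN ca sa ltr0_norm // opprK.
Qed.

Lemma ord3 (i : 'I_3) : i = 0 \/ i = 1 \/ i = 2%:R.
Proof.
case: i => [[|[|[|k]]] Hk].
- by left; apply/val_inj.
- by right; left; apply/val_inj.
- by right; right; apply/val_inj.
- by [].
Qed.

Lemma G_of (R : realType) (A : 'M[R[i]]_3) (t : R) : SU3 A ->
  A 1 2%:R = expi t * A 0 2%:R -> A 2%:R 0 = expi t * A 2%:R 1 ->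
  A 1 0 = expi t * expi t * A 0 1 -> A 0 0 = A 1 1 -> G_eta t A.
Proof.
move=> su e12 e20 e10 e00; split => //.
have zn : expi t != 0.
  apply/eqP => z0; have := expi_unit t; rewrite z0 mul0r => /eqP; by rewrite eq_sym oner_eq0.
exists (A 0 0), (A 0 1 * expi t), (A 0 2%:R), (A 2%:R 0), (A 2%:R 2%:R).
apply/matrixP => i j; rewrite mxE.
have [->|[->|->]] := ord3 i; have [->|[->|->]] := ord3 j => /=.
all: try first [ by [] | by rewrite mulfK | by rewrite e10 mulrC mulrA | by rewrite e00 | by rewrite e12 mulrC | by rewrite e20 mulrC mulfK ].
by rewrite e20 [expi t * _]mulrC mulfK.
Qed.

Lemma su3_inv (R : realType) (A : 'M[R[i]]_3) : SU3 A -> invmx A = adjmx A.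
Proof.
move=> [h _]; have [uA _] := mulmx1_unit h.
by rewrite -[adjmx A]mul1mx -(mulVmx uA) -mulmxA h mulmx1.
Qed.

Lemma tr3 (R : realType) (X : 'M[R[i]]_3) : \tr X = X 0 0 + X 1 1 + X 2%:R 2%:R.
Proof.
rewrite /mxtrace !big_ord_recr big_ord0 /= add0r.
by congr (_ + _ + _); congr (X _ _); apply/val_inj.
Qed.

Lemma mul_diagE (R : realType) (d : 'rV[R[i]]_3) (Z : 'M[R[i]]_3) i j :
  (diag_mx d *m Z) i j = d 0 i * Z i j.
Proof. by rewrite mul_diag_mx mxE. Qed.

Lemma wordE (R : realType) (L M : R -> 'M[R[i]]_3) x w :
  word_eval L M (x :: w) = fun t => letter_eval L M t x *m word_eval L M w t.
Proof. by apply: funext => t; rewrite /word_eval big_cons mulmxE. Qed.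


Lemma key_alg (R : realType) (l m c y0 y1 d0 d1 d2 : R[i]) : l != 0 -> c != 0 -> m != l ->
  d0 + d1 + d2 = 0 ->
  l * c * (y0 - y1) + l * (d0 + d1) + m * d2 = 0 ->
  (l * l) * c * (y0 - y1) *+ 2 + l * l * (d0 + d1) + m * m * d2 = 0 ->
  y0 = y1.
Proof.
move=> l0 c0 ml E0 E1 E2.
have E : (m - l) ^+ 2 * d2 = 0.
  transitivity (((l * l) * c * (y0 - y1) *+ 2 + l * l * (d0 + d1) + m * m * d2)
     - 2 * l * (l * c * (y0 - y1) + l * (d0 + d1) + m * d2) + l ^+ 2 * (d0 + d1 + d2)).
    ring.
  by rewrite E0 E1 E2; ring.
have d20 : d2 = 0.
  move/eqP: E; rewrite mulf_eq0 expf_eq0 /= subr_eq0 (negbTE ml) /= => /eqP //.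
rewrite d20 mulr0 addr0 in E1.
rewrite d20 addr0 in E0.
rewrite E0 mulr0 addr0 in E1.
move/eqP: E1; rewrite !mulf_eq0 (negbTE l0) (negbTE c0) /= subr_eq0 => /eqP //.
Qed.

Lemma key_words (R : realType) (eps : R) (L M : R -> 'M[R[i]]_3)
  (lambda : R[i]) (alpha : R) :
  0 < eps ->
  smooth_SU3_path eps L -> smooth_SU3_path eps M ->
  `|lambda| = 1 ->
  (forall n : nat, (0 < n)%N -> lambda ^+ n != 1) ->
  alpha != 0 ->
  L 0 = diag_mx (\row_(i < 3) [:: lambda; lambda; lambda ^- 2]`_i) ->
  invmx (L 0) *m mderive L 0
    = diag_mx (\row_(i < 3) [:: 0 +i* alpha; 0 +i* (- alpha); 0]`_i) ->
  (forall w : seq (bool * bool),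
      cderive (fun t => \tr (word_eval L M w t)) 0 = 0) ->
  forall w, word_eval L M w 0 0 0 = word_eval L M w 0 1 1.
Proof.
move=> eps0 [sL dLs] [sM dMs] nl inf a0 L0E AE hw.
have e0 : - eps < 0 < eps by apply/andP; split; lra.
have hn : \forall t \near 0, - eps < t < eps.
  by apply: filterS (nbhs0_lt eps0) => t; rewrite ltr_norml.
have dL : mdiff L.
  move=> i j; have [h1 h2] := dLs i j; split; [exact: (h1 0%N 0 e0) | exact: (h2 0%N 0 e0)].
have dM : mdiff M.
  move=> i j; have [h1 h2] := dMs i j; split; [exact: (h1 0%N 0 e0) | exact: (h2 0%N 0 e0)].
have dLi : mdiff (fun t => invmx (L t)).
  apply: (proj1 (mdiff_near _ (mdiff_adj dL))).
  by near=> t; rewrite su3_inv //; apply: sL; near: t.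
have dMi : mdiff (fun t => invmx (M t)).
  apply: (proj1 (mdiff_near _ (mdiff_adj dM))).
  by near=> t; rewrite su3_inv //; apply: sM; near: t.
have dlet : forall x, mdiff (fun t => letter_eval L M t x).
  case=> [[] []]; rewrite /letter_eval /=; [exact: dL | exact: dLi | exact: dM | exact: dMi].
move=> w.
have dY := mdiff_word dlet w.
set Y := word_eval L M w in dY *.
have h0 := hw w; rewrite -/Y (mdiff_tr dY) in h0.
have h1 := hw ((true, true) :: w); rewrite wordE -/Y /letter_eval /= in h1.
rewrite (mdiff_tr (proj1 (mdiff_mul dL dY))) (proj2 (mdiff_mul dL dY)) in h1.
have h2 := hw ((true, true) :: (true, true) :: w); rewrite !wordE -/Y /letter_eval /= in h2.
have dLY := mdiff_mul dL dY.
rewrite (mdiff_tr (proj1 (mdiff_mul dL (proj1 dLY)))) (proj2 (mdiff_mul dL (proj1 dLY))) in h2.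
rewrite (proj2 dLY) in h2.
have uL0 : L 0 \in unitmx by have [h _] := sL 0 e0; have [] := mulmx1_unit h.
have dLE : mderive L 0 = L 0 *m diag_mx (\row_(i < 3) [:: 0 +i* alpha; 0 +i* (- alpha); 0]`_i).
  by rewrite -AE mulKVmx.
rewrite dLE L0E in h1 h2.
rewrite !mulmxDr -!mulmxA !mxtraceD !tr3 !mul_diagE !mxE /= in h1 h2.
rewrite !tr3 !mderiveE in h0.
have hN : (0 +i* (- alpha)) = - (0 +i* alpha) :> R[i] by apply/eqP; rewrite eq_complex /= oppr0 !eqxx.
rewrite hN in h1 h2.
have l0 : lambda != 0 by apply/eqP => l0; move: nl; rewrite l0 normr0 => /eqP; rewrite eq_sym oner_eq0.
have c0 : (0 +i* alpha) != 0 :> R[i] by rewrite eq_complex /= negb_and a0 orbT.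
have ml : lambda ^- 2 != lambda.
  apply/eqP => e; have := inf 3%N isT.
  suff -> : lambda ^+ 3 = 1 by rewrite eqxx.
  have l2 : lambda ^+ 2 != 0 by rewrite expf_eq0.
  by rewrite exprSr [X in _ * X](esym e) mulfV.
apply: (@key_alg R lambda (lambda ^- 2) (0 +i* alpha) _ _ (cderive (fun s => Y s 0 0) 0) (cderive (fun s => Y s 1 1) 0) (cderive (fun s => Y s 2%:R 2%:R) 0)) => //.
- by rewrite -h1; ring.
- by rewrite -h2; ring.
Unshelve. all: by end_near.
Qed.


Lemma sum3 (R : realType) (F : 'I_3 -> R[i]) : \sum_(k < 3) F k = F 0 + F 1 + F 2%:R.
Proof.
rewrite !big_ord_recr big_ord0 /= add0r.
by congr (_ + _ + _); congr (F _); apply/val_inj.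
Qed.

Lemma cancelk (R : realType) (k x y : R[i]) : k != 0 -> k * (x - y) = 0 -> x = y.
Proof. by move=> k0 /eqP; rewrite mulf_eq0 (negbTE k0) subr_eq0 => /eqP. Qed.

Lemma mulmx3E (R : realType) (A B : 'M[R[i]]_3) i j :
  (A *m B) i j = A i 0 * B 0 j + A i 1 * B 1 j + A i 2%:R * B 2%:R j.
Proof. by rewrite mxE sum3. Qed.

Lemma comb (R : realType) (k x1 y1 x2 y2 : R[i]) : x1 = y1 -> x2 = y2 -> x1 - k * x2 - (y1 - k * y2) = 0.
Proof. by move=> -> ->; rewrite subrr. Qed.

Theorem lemma6p6 (R : realType) (eps : R) (L M : R -> 'M[R[i]]_3)
  (lambda : R[i]) (alpha : R) :
  0 < eps ->
  smooth_SU3_path eps L -> smooth_SU3_path eps M ->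
  `|lambda| = 1 ->
  (forall n : nat, (0 < n)%N -> lambda ^+ n != 1) ->
  alpha != 0 ->
  L 0 = diag_mx (\row_(i < 3) [:: lambda; lambda; lambda ^- 2]`_i) ->
  invmx (L 0) *m mderive L 0
    = diag_mx (\row_(i < 3) [:: 0 +i* alpha; 0 +i* (- alpha); 0]`_i) ->
  (forall w : seq (bool * bool),
      cderive (fun t => \tr (word_eval L M w t)) 0 = 0) ->
  exists eta : R, 0 <= eta < 2 * pi /\ G_eta eta (M 0).
Proof.
move=> eps0 hL hM nl inf a0 L0E AE hw.
have KW := key_words eps0 hL hM nl inf a0 L0E AE hw.
have e0 : - eps < 0 < eps by apply/andP; split; lra.
have suM := proj1 hM 0 e0.
have [hMM _] := suM.
have hMM' := mulmx1C hMM.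
have Mi : invmx (M 0) = adjmx (M 0) by apply: su3_inv.
have l0 : lambda != 0 by apply/eqP => l0; move: nl; rewrite l0 normr0 => /eqP; rewrite eq_sym oner_eq0.
have ml : lambda ^- 2 - lambda != 0.
  rewrite subr_eq0; apply/eqP => e; have := inf 3%N isT.
  suff -> : lambda ^+ 3 = 1 by rewrite eqxx.
  have l2 : lambda ^+ 2 != 0 by rewrite expf_eq0.
  by rewrite exprSr [X in _ * X](esym e) mulfV.
have W1 := KW [:: (false, true)].
have W2 := KW [:: (false, true); (false, true)].
have W3 := KW [:: (false, true); (true, true); (false, true)].
have W4 := KW [:: (false, true); (true, true); (false, false)].
have W5 := KW [:: (false, false); (true, true); (false, true)].
rewrite /word_eval !big_cons big_nil /letter_eval /= !mulr1 -!mulmxE L0E Mi in W1 W2 W3 W4 W5.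
rewrite [LHS]mulmx3E [RHS]mulmx3E in W2.
rewrite [LHS]mulmx3E [RHS]mulmx3E !mul_diagE !mxE /= in W3.
rewrite /adjmx in W4 W5.
rewrite [LHS]mulmx3E [RHS]mulmx3E !mul_diagE !mxE /= in W4.
rewrite [LHS]mulmx3E [RHS]mulmx3E !mul_diagE !mxE /= in W5.
have C00 := congr1 (fun X : 'M[R[i]]_3 => X 0 0) hMM'.
have C11 := congr1 (fun X : 'M[R[i]]_3 => X 1 1) hMM'.
have C02 := congr1 (fun X : 'M[R[i]]_3 => X 0 2%:R) hMM'.
have C12 := congr1 (fun X : 'M[R[i]]_3 => X 1 2%:R) hMM'.
have R00 := congr1 (fun X : 'M[R[i]]_3 => X 0 0) hMM.
have R11 := congr1 (fun X : 'M[R[i]]_3 => X 1 1) hMM.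
have R02 := congr1 (fun X : 'M[R[i]]_3 => X 0 2%:R) hMM.
have R12 := congr1 (fun X : 'M[R[i]]_3 => X 1 2%:R) hMM.
rewrite /= /adjmx !mulmx3E !mxE /= in C00 C11 C02 C12 R00 R11 R02 R12.
have hb : M 0 0 2%:R * M 0 2%:R 0 = M 0 1 2%:R * M 0 2%:R 1.
  apply: (cancelk ml); rewrite -(comb lambda W3 W2); ring.
have hc : M 0 0 2%:R * conjc (M 0 0 2%:R) = M 0 1 2%:R * conjc (M 0 1 2%:R).
  apply: (cancelk ml); rewrite -(comb lambda W4 (etrans R00 (esym R11))); ring.
have hd : conjc (M 0 2%:R 0) * M 0 2%:R 0 = conjc (M 0 2%:R 1) * M 0 2%:R 1.
  apply: (cancelk ml); rewrite -(comb lambda W5 (etrans C00 (esym C11))); ring.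
have Ceq := etrans C00 (esym C11).
rewrite W1 in Ceq.
have he : M 0 0 1 * conjc (M 0 0 1) = M 0 1 0 * conjc (M 0 1 0).
  apply/eqP; rewrite -subr_eq0; apply/eqP; rewrite -oppr0 -(comb 1 Ceq hd); ring.
have := core_alg W1 hb hc hd he C02 C12 R02 R12.
case=> [[z [hz [e12 [e20 e10]]]] | [z02 [z12 [z20 [z21 [nz01 hw1]]]]]].
  have [t [ht et]] := expi_exists hz.
  exists t; split => //.
  by apply: G_of => //; rewrite et.
have [t [ht et]] := expi_exists hw1.
have p0 := pi_gt0 R.
exists (t / 2); split.
  by case/andP: ht => t0 t2; apply/andP; split; lra.
have ee : expi (t / 2) * expi (t / 2) = M 0 1 0 / M 0 0 1.
  by rewrite -expiD -splitr.
apply: G_of => //.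
- by rewrite z12 z02 mulr0.
- by rewrite z20 z21 mulr0.
- by rewrite ee mulfVK.
Qed.
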